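(* Let $f:Y\to X$ be a covering of finite connected graphs. Consider the exact sequences \[ 0\to\mathbb{Z}\xrightarrow{\iota_Y}\mathrm{Div}(Y)\xrightarrow{\mathcal{L}_Y}\mathrm{Div}(Y)\to\mathrm{Pic}(Y)\to0 \] and \[ 0\to\mathbb{Z}\xrightarrow{\iota_X}\mathrm{Div}(X)\xrightarrow{\mathcal{L}_X}\mathrm{Div}(X)\to\mathrm{Pic}(X)\to0. \] The vertical maps are multiplication by $[Y:X]$ on $\mathbb{Z}$, $f_{\mathsf r}$ on the first $\mathrm{Div}$, $f_*$ on the second $\mathrm{Div}$, and the map $\mathrm{Pic}(Y)\to\mathrm{Pic}(X)$ induced by $f_*$. These vertical maps make the resulting diagram commute. Explicitly, $f_{\mathsf r}\circ\iota_Y=[Y:X]\,\iota_X$ and $f_*\circ\mathcal{L}_Y=\mathcal{L}_X\circ f_{\mathsf r}$. Moreover, $f_*$ and the induced map $\mathrm{Pic}(Y)\to\mathrm{Pic}(X)$ are surjective.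
   Context: A finite graph $X$ consists of a finite vertex set $V_X$, a finite edge set $\mathbb{E}_X$, a fixed-point-free involution $e\mapsto\bar e$, and maps $s,t:\mathbb{E}_X\to V_X$ with $s(\bar e)=t(e)$ and $t(\bar e)=s(e)$. $\mathbb{E}_{X,v}=\{e\in\mathbb{E}_X: s(e)=v\}$. A morphism $f:Y\to X$ consists of maps $f_V$, $f_{\mathbb{E}}$ compatible with $s$, $t$ and the involution. It is a covering if for each $w\in V_Y$ there is a positive integer $m_w(f)$ such that $f_{\mathbb{E}}:\mathbb{E}_{Y,w}\to\mathbb{E}_{X,f_V(w)}$ is $m_w(f)$-to-one. The degree is $[Y:X]=\sum_{w\in f_V^{-1}(v)}m_w(f)$, which is independent of $v\in V_X$ when $X$ is connected. $\mathrm{Div}(X)=\bigoplus_{v\in V_X}\mathbb{Z}[v]$. The Laplacian $\mathcal{L}_X:\mathrm{Div}(X)\to\mathrm{Div}(X)$ is $\mathcal{L}_X([v])=\sum_{e\in\mathbb{E}_{X,v}}([v]-[t(e)])$, and $\mathrm{Pic}(X)=\mathrm{coker}\,\mathcal{L}_X$. The map $\iota_X:\mathbb{Z}\to\mathrm{Div}(X)$ sends $1$ to $\sum_{v\in V_X}[v]$, and for connected $X$ the displayed rows are exact. The homomorphisms $f_*,f_{\mathsf r}:\mathrm{Div}(Y)\to\mathrm{Div}(X)$ are defined by $f_*([w])=[f_V(w)]$ and $f_{\mathsf r}([w])=m_w(f)[f_V(w)]$. *)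

(* Defs.v *)
From HB Require Import structures.
From mathcomp Require Import all_boot all_order all_algebra.
Set Implicit Arguments. Unset Strict Implicit. Unset Printing Implicit Defensive.
Import Order.TTheory GRing.Theory Num.Theory.
Local Open Scope ring_scope.

(* A finite graph in Serre's sense. *)
Record graph := Graph {
  V : finType;
  E : finType;
  einv : E -> E;
  src : E -> V;
  tgt : E -> V;
  einvK : forall e, einv (einv e) = e;
  einv_nofix : forall e, einv e != e;
  src_inv : forall e, src (einv e) = tgt e;
  tgt_inv : forall e, tgt (einv e) = src e
}.

Definition adj (X : graph) : rel (V X) :=
  fun u v => [exists e : E X, (src e == u) && (tgt e == v)].

Definition connected_graph (X : graph) : Prop :=
  (0 < #|V X|)%N /\ forall u v : V X, connect (@adj X) u v.

Record morphism (Y X : graph) := Morphism {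
  fV : V Y -> V X;
  fE : E Y -> E X;
  fsrc : forall e, fV (src e) = src (fE e);
  ftgt : forall e, fV (tgt e) = tgt (fE e);
  finv : forall e, fE (einv e) = einv (fE e)
}.

Definition is_covering (Y X : graph) (f : morphism Y X) (m : V Y -> nat) : Prop :=
  forall w : V Y, (0 < m w)%N /\
    forall e' : E X, src e' = fV f w ->
      #|[set e : E Y | (src e == w) && (fE f e == e')]| = m w.

Definition cov_degree (Y X : graph) (f : morphism Y X) (m : V Y -> nat) (v : V X) : nat :=
  (\sum_(w : V Y | fV f w == v) m w)%N.

Definition Div (X : graph) := {ffun V X -> int}.

Definition dunit (X : graph) (v : V X) : Div X := [ffun x => ((x == v) : nat)%:Z].

Definition laplacian (X : graph) (D : Div X) : Div X :=
  \sum_(v : V X) (\sum_(e : E X | src e == v) (dunit v - dunit (tgt e))) *~ (D v).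

Definition iota_div (X : graph) (n : int) : Div X := (\sum_(v : V X) dunit v) *~ n.

Definition push (Y X : graph) (f : morphism Y X) (D : Div Y) : Div X :=
  \sum_(w : V Y) dunit (fV f w) *~ (D w).

Definition pushr (Y X : graph) (f : morphism Y X) (m : V Y -> nat) (D : Div Y) : Div X :=
  \sum_(w : V Y) dunit (fV f w) *~ (D w * (m w)%:Z).

(* Main.v *)
Require Import Defs.
From HB Require Import structures.
From mathcomp Require Import all_boot all_order all_algebra.
Import Order.TTheory GRing.Theory Num.Theory.
Local Open Scope ring_scope.

Lemma ffunMzE (A : finType) (F : {ffun A -> int}) k b : (F *~ k) b = F b *~ k.
Proof. case: k => n /=; first by rewrite ffunMnE. by rewrite !ffunE ffunMnE. Qed.

Definition lin (A B : finType) (h : A -> {ffun B -> int}) (D : {ffun A -> int}) :=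
  \sum_a h a *~ D a.

Arguments lin {A B}.
Lemma lin_add (A B : finType) (h : A -> {ffun B -> int}) D1 D2 : lin h (D1 + D2) = lin h D1 + lin h D2.
Proof. rewrite /lin -big_split /=; apply: eq_bigr => a _; by rewrite ffunE mulrzDr. Qed.

Lemma lin0 (A B : finType) (h : A -> {ffun B -> int}) : lin h 0 = 0.
Proof. rewrite /lin big1 // => a _; by rewrite ffunE mulr0z. Qed.

Lemma lin_opp (A B : finType) (h : A -> {ffun B -> int}) D : lin h (- D) = - lin h D.
Proof. rewrite /lin -sumrN; apply: eq_bigr => a _; by rewrite ffunE mulrNz. Qed.

Lemma lin_mulz (A B : finType) (h : A -> {ffun B -> int}) D k : lin h (D *~ k) = lin h D *~ k.
Proof. rewrite /lin mulrz_suml; apply: eq_bigr => a _; by rewrite ffunMzE mulrzz mulrzA. Qed.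

Lemma lin_sub (A B : finType) (h : A -> {ffun B -> int}) D1 D2 : lin h (D1 - D2) = lin h D1 - lin h D2.
Proof. by rewrite lin_add lin_opp. Qed.

Lemma lin_sum (A B : finType) (h : A -> {ffun B -> int}) I (r : seq I) P F :
  lin h (\sum_(i <- r | P i) F i) = \sum_(i <- r | P i) lin h (F i).
Proof. elim/big_rec2: _ => [|i y1 y2 _ <-]; by rewrite ?lin0 ?lin_add. Qed.

Definition du (A : finType) (a : A) : {ffun A -> int} := [ffun x => ((x == a) : nat)%:Z].

Arguments du {A}.
Lemma lin_du (A B : finType) (h : A -> {ffun B -> int}) a : lin h (du a) = h a.
Proof.
rewrite /lin (bigD1 a) //= big1 ?addr0; first by rewrite ffunE eqxx.
by move=> b /negbTE hb; rewrite ffunE hb mulr0z.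
Qed.

Lemma decomp {A : finType} (D : {ffun A -> int}) : D = \sum_a du a *~ D a.
Proof.
apply/ffunP => b; rewrite sum_ffunE (bigD1 b) //= big1 ?addr0.
  by rewrite ffunMzE ffunE eqxx mulrzz mul1r.
by move=> a hab; rewrite ffunMzE ffunE eq_sym (negbTE hab) mulrzz mul0r.
Qed.

From mathcomp Require Import zify.

Lemma lin_dunit (X : graph) (B : finType) (h : V X -> {ffun B -> int}) a :
  lin h (dunit a) = h a.
Proof. exact: lin_du. Qed.

Lemma pushE (Y X : graph) (f : morphism Y X) D :
  push f D = lin (fun w => dunit (fV f w)) D.
Proof. by []. Qed.

Lemma lapE (X : graph) (D : Div X) :
  laplacian D = lin (fun v => \sum_(e : E X | src e == v) (dunit v - dunit (tgt e))) D.
Proof. by []. Qed.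

Section Cov.
Variables (Y X : graph) (f : morphism Y X) (m : V Y -> nat).
Hypothesis cov : is_covering f m.

Lemma cov_sum (G : E X -> Div X) w :
  \sum_(e | src e == w) G (fE f e) = (\sum_(e' | src e' == fV f w) G e') *+ m w.
Proof.
rewrite (partition_big (fE f) (fun e' => src e' == fV f w)); last first.
  by move=> e /eqP <-; rewrite fsrc.
rewrite -sumrMnl; apply: eq_bigr => e' /eqP he'.
rewrite (eq_bigr (fun _ => G e')); last by move=> e /andP[_ /eqP ->].
rewrite sumr_const; congr (_ *+ _).
rewrite -(proj2 (cov w) e' he'); apply: eq_card => e; by rewrite inE.
Qed.

Lemma deg_src e' : cov_degree f m (src e') = #|[set e | fE f e == e']|.
Proof.
rewrite /cov_degree -sum1_card (partition_big (@src Y) (fun w => fV f w == src e')).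
  apply: eq_bigr => w /eqP hw.
  rewrite -(proj2 (cov w) e' (esym hw)) -sum1_card; apply: eq_bigl => e.
  by rewrite !inE andbC.
by move=> e; rewrite inE => /eqP <-; rewrite fsrc.
Qed.

Lemma deg_inv e' : #|[set e | fE f e == einv e']| = #|[set e | fE f e == e']|.
Proof.
rewrite -(card_preimset _ (can_inj (@einvK Y))); apply: eq_card => e.
rewrite !inE Defs.finv; exact: (inj_eq (can_inj (@einvK X))).
Qed.

Lemma deg_edge e' : cov_degree f m (src e') = cov_degree f m (tgt e').
Proof. by rewrite -src_inv !deg_src deg_inv. Qed.

Lemma deg_const : connected_graph X -> forall u v, cov_degree f m u = cov_degree f m v.
Proof.
move=> [_ conn] u v.
have cl : closed (@adj X) [pred x | cov_degree f m x == cov_degree f m u].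
  move=> x y /existsP [e' /andP [/eqP hx /eqP hy]].
  by rewrite /= -hx -hy !inE deg_edge.
have := closed_connect cl (conn u v).
by rewrite !inE eqxx => /esym /eqP ->.
Qed.

End Cov.

Lemma iota_val (Z : graph) n (v : V Z) : iota_div Z n v = n.
Proof.
rewrite /iota_div ffunMzE sum_ffunE (bigD1 v) //= big1 => [|u hu].
  by rewrite ffunE eqxx addr0 mulrzz mul1r.
by rewrite ffunE eq_sym (negbTE hu).
Qed.

Theorem proposition3p1 (Y X : graph) (f : morphism Y X) (m : V Y -> nat) :
  connected_graph Y -> connected_graph X -> is_covering f m ->
  (* left square: f_r o iota_Y = [Y:X] iota_X  (with [Y:X] computed at any vertex) *)
  (forall (v0 : V X) (n : int),
      pushr f m (iota_div Y n) = iota_div X (n * (cov_degree f m v0)%:Z)) /\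
  (* middle square: f_* o L_Y = L_X o f_r *)
  (forall D : Div Y, push f (laplacian D) = laplacian (pushr f m D)) /\
  (* f_* maps im L_Y into im L_X, so it induces Pic(Y) -> Pic(X) *)
  (forall D : Div Y, exists C : Div X, push f (laplacian D) = laplacian C) /\
  (* f_* is surjective *)
  (forall D : Div X, exists D' : Div Y, push f D' = D) /\
  (* the induced map Pic(Y) -> Pic(X) is surjective *)
  (forall D : Div X, exists (D' : Div Y) (C : Div X), push f D' - D = laplacian C).
Proof.
move=> cY cX cov.
have P2 : forall D : Div Y, push f (laplacian D) = laplacian (pushr f m D).
  move=> D; rewrite pushE !lapE [lin _ D]/lin /pushr !lin_sum.
  apply: eq_bigr => w _.
  rewrite lin_mulz lin_sum lin_mulz lin_dunit.
  rewrite (eq_bigr (fun e => dunit (src (fE f e)) - dunit (tgt (fE f e)))); last first.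
    by move=> e /eqP <-; rewrite lin_sub !lin_dunit fsrc ftgt.
  rewrite (@cov_sum _ _ _ _ cov (fun e0 => dunit (src e0) - dunit (tgt e0))) pmulrn -mulrzA_C.
  by congr (_ *~ _ *~ _); apply: eq_bigr => e /eqP ->.
have hx : forall x : V X, exists w, fV f w == x.
  move=> x; case: (pickP (fun w => fV f w == x)) => [w hw|none]; first by exists w.
  exfalso; case: cY => /card_gt0P [w0 _] _.
  have h0 : cov_degree f m x = 0%N by rewrite /cov_degree big_pred0.
  move: h0; rewrite (@deg_const _ _ _ _ cov cX x (fV f w0)) /cov_degree (bigD1 w0) //=.
  have := proj1 (cov w0); lia.
have P4 : forall D : Div X, exists D' : Div Y, push f D' = D.
  move=> D; exists (\sum_x dunit (xchoose (hx x)) *~ D x).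
  rewrite pushE lin_sum {2}(decomp D); apply: eq_bigr => x _.
  by rewrite lin_mulz lin_dunit (eqP (xchooseP (hx x))).
split; last split; [| exact: P2 | split; [| split]].
- move=> v0 n; apply/ffunP => x.
  rewrite iota_val -(@deg_const _ _ _ _ cov cX x v0) /cov_degree /pushr sum_ffunE.
  rewrite (big_morph Posz PoszD (erefl _)) mulr_sumr.
  rewrite [RHS]big_mkcond /=; apply: eq_bigr => w _; rewrite ffunMzE ffunE iota_val eq_sym.
  by case: eqP => _; rewrite mulrzz ?mul1r ?mul0r ?mulr0.
- by move=> D; exists (pushr f m D).
- exact: P4.
- move=> D; have [D' hD'] := P4 D; exists D', 0.
  by rewrite hD' subrr lapE lin0.
Qed.
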